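(* Let $g(x)=\alpha x^{q^k}+\beta x$ with $\alpha\in\mathbb{F}_{q^n}^*$, $\beta\in\mathbb{F}_{q^n}$, $1\le k<n$. Let $f(y)=a_dy^{q^d}+a_\ell y^{q^\ell}$ with $0\le \ell<d<n$ and $a_d,a_\ell\in\mathbb{F}_{q^n}^*$, and let $0\le h<n$. Assume that either ($d=h$ and $a_d=\beta$) or ($\ell=h$ and $a_\ell=\beta$). Set $t=\ell$ if $h=d$, and $t=d$ if $h=\ell$. Then $L_f\cap L_g\ne\emptyset$ if and only if $\mathrm{N}_{q^n/q^e}(a_t/\alpha)=1$, where $e=\gcd(n,k,t-h)$.
   Context: Let $q$ be a prime power, $n\ge2$. For $e\mid n$, $\mathrm{N}_{q^n/q^e}(x)=x^{(q^n-1)/(q^e-1)}$. For $q$-polynomials $g,f$ over $\mathbb{F}_{q^n}$ and an integer $0\le h<n$: $L_g=\{\langle(x,g(x))\rangle_{\mathbb{F}_{q^n}}:x\in\mathbb{F}_{q^n}^*\}$ and $L_f=\{\langle(y^{q^h},f(y))\rangle_{\mathbb{F}_{q^n}}:y\in\mathbb{F}_{q^n}^*\}$. *)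

(* Defs.v *)
From HB Require Import structures.
From mathcomp Require Import all_boot all_order all_algebra all_field.
Set Implicit Arguments. Unset Strict Implicit. Unset Printing Implicit Defensive.
Import GRing.Theory.
Local Open Scope ring_scope.

Definition relnorm (F : finFieldType) (q n e : nat) (x : F) : F :=
  x ^+ ((q ^ n).-1 %/ (q ^ e).-1)%N.

(* Two nonzero vectors of F^2 span the same F-line (projective point). *)
Definition same_point (F : fieldType) (u v : F * F) : Prop :=
  exists lam : F, lam != 0 /\ u.1 = lam * v.1 /\ u.2 = lam * v.2.

Definition in_Lg (F : fieldType) (g : F -> F) (P : F * F) : Prop :=
  exists x : F, x != 0 /\ same_point P (x, g x).

Definition in_Lf (F : fieldType) (q h : nat) (f : F -> F) (P : F * F) : Prop :=
  exists y : F, y != 0 /\ same_point P (y ^+ (q ^ h), f y).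

Definition LfLg_meet (F : fieldType) (q h : nat) (f g : F -> F) : Prop :=
  exists P : F * F, in_Lf q h f P /\ in_Lg g P.

(* Main.v *)
Require Import Defs.
From HB Require Import structures.
From mathcomp Require Import all_boot all_order all_algebra all_field.
From mathcomp Require Import all_solvable zify ring.
Import GRing.Theory.
Local Open Scope ring_scope.
Set Implicit Arguments. Unset Strict Implicit.

Lemma gcd_pow1 (q a b : nat) : (0 < q)%N ->
  gcdn (q ^ a).-1 (q ^ b).-1 = (q ^ (gcdn a b)).-1.
Proof.
move=> q0.
have [N] := ubnP (a + b); elim: N a b => [|N IH] a b //= hab.
wlog ba : a b hab / (b <= a)%N.
  move=> W; case: (leqP b a) => h; first exact: W.
  rewrite gcdnC [gcdn a b]gcdnC; apply: W; [by rewrite addnC | exact: ltnW].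
case: (posnP b) => [->|b0]; first by rewrite expn0 /= !gcdn0.
have -> : (q ^ a).-1 = (q ^ (a - b) * (q ^ b).-1 + (q ^ (a - b)).-1)%N.
  have -> : a = (a - b + b)%N by rewrite subnK.
  rewrite addnK expnD.
  have : (0 < q ^ (a - b))%N by rewrite expn_gt0 q0.
  have : (0 < q ^ b)%N by rewrite expn_gt0 q0.
  move: (q ^ (a - b))%N (q ^ b)%N => X Y; nia.
rewrite gcdnC gcdnMDl IH; last by lia.
suff -> : gcdn a b = gcdn b (a - b) by [].
by rewrite -{1}(subnK ba) gcdnC gcdnDr.
Qed.
Lemma bez (F : fieldType) (g : F) (N a b : nat) : g != 0 -> (0 < a)%N ->
  g ^+ N = 1 -> exists u w : F, g ^+ (gcdn N (gcdn a b)) = u ^+ a * w ^+ b.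
Proof.
move=> g0 a0 gN.
have g1p : (0 < gcdn a b)%N by rewrite gcdn_gt0 a0.
case: (egcdnP b a0) => km kn E1 _.
case: (egcdnP N g1p) => km' kn' E2 _.
have Hg1 : g ^+ gcdn a b = (g ^+ km) ^+ a * ((g ^+ kn)^-1) ^+ b.
  apply: (mulIf (expf_neq0 (kn * b) g0)).
  rewrite -exprD addnC -E1 exprM -mulrA exprM exprVn mulVf ?mulr1 //.
  by rewrite !expf_neq0.
exists ((g ^+ km) ^+ km'), (((g ^+ kn)^-1) ^+ km').
rewrite gcdnC.
have -> : g ^+ gcdn (gcdn a b) N = g ^+ (km' * gcdn a b).
  by rewrite E2 exprD mulnC exprM gN expr1n mul1r.
by rewrite mulnC exprM Hg1 exprMn (exprAC _ a) (exprAC _ b).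
Qed.
Lemma unitN (F : finFieldType) N (x : F) : #|F| = N.+1 -> x != 0 -> x ^+ N = 1.
Proof.
move=> hF hx; apply: (mulfI hx); rewrite mulr1 -exprS -hF expf_card //.
Qed.

Lemma core (F : finFieldType) (a b N : nat) (r : F) : #|F| = N.+1 ->
  (0 < a)%N -> (0 < b)%N -> r != 0 ->
  (exists u w : F, [/\ u != 0, w != 0 & r = u ^+ a * w ^+ b]) <->
  r ^+ (N %/ gcdn N (gcdn a b)) = 1.
Proof.
move=> hF a0 b0 r0; set c := gcdn N (gcdn a b).
have N0 : (0 < N)%N.
  have := finNzRing_gt1 F; rewrite hF; lia.
have c0 : (0 < c)%N by rewrite gcdn_gt0 N0.
have cN : (c %| N)%N by exact: dvdn_gcdl.
have ca : (c %| a)%N by rewrite (dvdn_trans (dvdn_gcdr _ _)) ?dvdn_gcdl.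
have cb : (c %| b)%N by rewrite (dvdn_trans (dvdn_gcdr _ _)) ?dvdn_gcdr.
split.
  case=> u [w [u0 w0 ->]].
  have key (x : F) d : x != 0 -> (c %| d)%N -> x ^+ d ^+ (N %/ c) = 1.
    move=> x0 cd; rewrite -exprM.
    have -> : (d * (N %/ c) = d %/ c * N)%N.
      by rewrite -{1}(divnK cd) -mulnA (mulnC c) divnK.
    by rewrite exprM (unitN hF (expf_neq0 _ x0)).
  by rewrite exprMn (key u a) ?(key w b) ?mulr1.
move=> hr.
pose rs := enum (predC1 (0 : F)).
have : has N.-primitive_root rs.
  apply: has_prim_root => //.
  - apply/allP => x; rewrite mem_enum /= => hx; rewrite unity_rootE.
    by apply/eqP; exact: unitN.
  - exact: enum_uniq.
  - by rewrite -cardE cardC1 hF.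
case/hasP => gam; rewrite mem_enum /= => gam0 pg.
have [i ri] := prim_rootP pg (unitN hF r0).
have ci : (c %| i)%N.
  have : (N %| i * (N %/ c))%N.
    by rewrite (prim_order_dvd pg) exprM -ri hr.
  rewrite -{1}(divnK cN) [(i * _)%N]mulnC dvdn_pmul2l //.
  by rewrite divn_gt0 // dvdn_leq.
have [u [w E]] := bez b gam0 a0 (prim_expr_order pg).
exists (u ^+ (i %/ c)), (w ^+ (i %/ c)).
have Er : r = (u ^+ (i %/ c)) ^+ a * (w ^+ (i %/ c)) ^+ b.
  rewrite ri; have -> : gam ^+ i = (gam ^+ c) ^+ (i %/ c)%N by rewrite -exprM mulnC divnK.
  by rewrite E exprMn -!exprM !(mulnC _ (i %/ c)%N).
split => //.
- by apply: contraNneq r0 => u0; rewrite Er u0 expr0n (gtn_eqF a0) mul0r.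
- by apply: contraNneq r0 => w0; rewrite Er w0 expr0n (gtn_eqF b0) mulr0.
Qed.
Lemma canc (F : comRingType) (beta Y v x z : F) :
  ((beta * Y + v) * x = (z + beta * x) * Y) <-> (v * x = z * Y).
Proof.
have -> : (z + beta * x) * Y = beta * Y * x + z * Y by ring.
rewrite mulrDl; split => [/addrI|->] //.
Qed.

Lemma eqA (F : fieldType) (c alpha x w : F) a b : alpha != 0 -> x != 0 -> w != 0 ->
  (c * w * x = alpha * x ^+ a.+1 * w ^+ b.+1) <-> c / alpha = x ^+ a * w ^+ b.
Proof.
move=> a0 x0 w0; have wx0 : w * x != 0 by rewrite mulf_neq0.
rewrite !exprSr.
have -> : alpha * (x ^+ a * x) * (w ^+ b * w) = alpha * (x ^+ a * w ^+ b) * (w * x) by ring.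
rewrite -mulrA; split => [/(mulIf wx0) ->| E].
  by rewrite mulrC mulKf.
by rewrite -E [alpha * _]mulrC divfK.
Qed.

Lemma eqB (F : fieldType) (c alpha x w : F) a b : alpha != 0 -> x != 0 -> w != 0 ->
  (c * w ^+ b.+1 * x = alpha * x ^+ a.+1 * w) <-> c / alpha = x ^+ a * (w^-1) ^+ b.
Proof.
move=> a0 x0 w0; have wx0 : w * x != 0 by rewrite mulf_neq0.
have wb0 : w ^+ b != 0 by rewrite expf_neq0.
rewrite !exprSr.
have -> : alpha * (x ^+ a * x) * w = alpha * x ^+ a * (w * x) by ring.
have -> : c * (w ^+ b * w) * x = c * w ^+ b * (w * x) by ring.
split => [/(mulIf wx0) E| E].
  rewrite exprVn -[c](mulfK wb0) E; field.
  by rewrite a0 wb0.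
congr (_ * _).
have -> : x ^+ a = c / alpha * w ^+ b by rewrite E exprVn divfK.
by field.
Qed.

Lemma pow_card (F : finFieldType) (x : F) j : x ^+ (#|F| ^ j) = x.
Proof.
elim: j => [|j IH]; first by rewrite expn0 expr1.
by rewrite expnS exprM expf_card IH.
Qed.

Unset Implicit Arguments. Set Strict Implicit.

Theorem proposition3p10 (F : finFieldType) (p m q n : nat)
  (hp : prime p) (hm : (0 < m)%N) (hq : q = (p ^ m)%N) (hn : (2 <= n)%N)
  (hF : #|F| = (q ^ n)%N)
  (alpha beta ad al : F) (k d l h : nat)
  (halpha : alpha != 0) (hk1 : (1 <= k)%N) (hkn : (k < n)%N)
  (hld : (l < d)%N) (hdn : (d < n)%N) (had : ad != 0) (hal : al != 0)
  (hh : (h < n)%N)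
  (hcase : (d = h /\ ad = beta) \/ (l = h /\ al = beta)) :
  let g := fun x : F => alpha * x ^+ (q ^ k) + beta * x in
  let f := fun y : F => ad * y ^+ (q ^ d) + al * y ^+ (q ^ l) in
  let t := if h == d then l else d in
  let at_ := if h == d then al else ad in
  let e := gcdn n (gcdn k `|t%:Z - h%:Z|%N) in
  LfLg_meet q h f g <-> relnorm q n e (at_ / alpha) = 1.
Proof.
move=> g f t at_ e.
have q1 : (1 < q)%N.
  rewrite hq; apply: (leq_trans (prime_gt1 hp)); rewrite -{1}(expn1 p).
  by apply: leq_pexp2l => //; exact: prime_gt0.
have q0 : (0 < q)%N by lia.
pose N := (q ^ n).-1.
have ppos j : (0 < q ^ j)%N by rewrite expn_gt0 q0.
have hFN : #|F| = N.+1 by rewrite hF /N prednK.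
have apos j : (0 < j)%N -> (0 < (q ^ j).-1)%N.
  move=> j0; have : (q ^ 1 <= q ^ j)%N by apply: leq_pexp2l.
  rewrite expn1; lia.
have root j (w : F) : w != 0 -> exists y : F, y != 0 /\ y ^+ (q ^ j) = w.
  move=> w0; exists (w ^+ (q ^ ((n - 1) * j))); split; first by rewrite expf_neq0.
  rewrite -exprM -expnD.
  have -> : ((n - 1) * j + j = n * j)%N by nia.
  by rewrite expnM -hF pow_card.
have Hmeet : LfLg_meet q h f g <->
    exists x y : F, [/\ x != 0, y != 0 & f y * x = g x * y ^+ (q ^ h)].
  split.
    case=> P [[y [y0 [lam [lam0 [P1 P2]]]]] [x [x0 [mu [mu0 [Q1 Q2]]]]]].
    exists x, y; split => //.
    have e1 : lam * f y = mu * g x by rewrite -P2 -Q2.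
    have e2 : lam * y ^+ (q ^ h) = mu * x by rewrite -P1 -Q1.
    apply: (mulfI lam0); rewrite mulrA e1.
    have -> : lam * (g x * y ^+ (q ^ h)) = g x * (lam * y ^+ (q ^ h)) by ring.
    rewrite e2; ring.
  case=> x [y [x0 y0 E]].
  exists (y ^+ (q ^ h), f y); split.
    exists y; split => //; exists 1; split; [exact: oner_neq0 | by rewrite !mul1r].
  exists x; split => //; exists (y ^+ (q ^ h) / x); split.
    by rewrite mulf_neq0 ?invr_eq0 ?expf_neq0.
  split => /=; first by rewrite divfK.
  apply: (mulIf x0); rewrite E; field; exact: x0.
have hgcd s : ((q ^ gcdn n (gcdn k s)).-1 =
   gcdn N (gcdn (q ^ k).-1 (q ^ s).-1))%N by rewrite !gcd_pow1.
apply: (iff_trans Hmeet).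
case: hcase => [[hd hb] | [hl hb]].
- subst d beta.
  rewrite /e /t /at_ eqxx /relnorm.
  have hs : `|l%:Z - h%:Z|%N = (h - l)%N by rewrite distnEr // ltnW.
  rewrite hs hgcd -/N.
  have r0 : al / alpha != 0 by rewrite mulf_neq0 ?invr_eq0.
  apply: (iff_trans _ (core hFN (apos _ hk1) (apos _ _) r0)); last by rewrite subn_gt0.
  split.
    case=> x [y [x0 y0]]; rewrite /f /g canc => E.
    exists x, (y ^+ (q ^ l)); split => //; first by rewrite expf_neq0.
    apply/(eqA _ _ _ halpha x0 (expf_neq0 _ y0)).
    by rewrite !prednK // -exprM -expnD subnKC // ltnW.
  case=> u [w [u0 w0 E]].
  have [y [y0 hy]] := root l w w0.
  exists u, y; split => //; rewrite /f /g canc.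
  have hY : y ^+ (q ^ h) = w ^+ (q ^ (h - l)) by rewrite -hy -exprM -expnD subnKC // ltnW.
  rewrite hY hy.
  have := (eqA al (q ^ k).-1 (q ^ (h - l)).-1 halpha u0 w0).2 E.
  by rewrite !prednK.
- subst l beta.
  rewrite /e /t /at_ (ltn_eqF hld) /relnorm.
  have hs : `|d%:Z - h%:Z|%N = (d - h)%N by rewrite distnEl // ltnW.
  rewrite hs hgcd -/N.
  have r0 : ad / alpha != 0 by rewrite mulf_neq0 ?invr_eq0.
  apply: (iff_trans _ (core hFN (apos _ hk1) (apos _ _) r0)); last by rewrite subn_gt0.
  split.
    case=> x [y [x0 y0]]; rewrite /f /g [ad * _ + _]addrC canc => E.
    exists x, (y ^+ (q ^ h))^-1; split => //; first by rewrite invr_eq0 expf_neq0.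
    apply/(eqB _ _ _ halpha x0 (expf_neq0 _ y0)).
    by rewrite !prednK // -exprM -expnD subnKC // ltnW.
  case=> u [w [u0 w0 E]].
  have [y [y0 hy]] := root h w^-1 (invr_neq0 w0).
  exists u, y; split => //; rewrite /f /g [ad * _ + _]addrC canc.
  have hY : y ^+ (q ^ d) = w^-1 ^+ (q ^ (d - h)) by rewrite -hy -exprM -expnD subnKC // ltnW.
  rewrite hY hy.
  have := (eqB ad (q ^ k).-1 (q ^ (d - h)).-1 halpha u0 (invr_neq0 w0)).2.
  rewrite invrK => /(_ E).
  by rewrite !prednK.
Qed.
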